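(* Let $(A,\mathfrak{g},\omega)$ be an $n$-plectic structure, $f\in\mathcal{P}ois(A,\mathfrak{g},\omega)$ a homogeneous Poisson cotensor with associated Poisson constraint $y$ (i.e. $i_y\omega=f$) and associated Hamilton tensor $x$ (i.e. $i_x\omega=df$). If both $x$ and $y$ are homogeneous, then $|x|=|f|+n$ and $|y|=|x|+1$ with respect to the tensor grading. Moreover $d\,i_y\omega=i_x\omega$.
   Context: A Lie Rinehart pair $(A,\mathfrak{g})$: $A$ a commutative associative unital $\mathbb{R}$-algebra, $\mathfrak{g}$ a real Lie algebra that is an $A$-module, with a Lie algebra morphism $D:\mathfrak{g}\to\mathrm{Der}(A)$ such that $[x,ay]=D_x(a)y+a[x,y]$; torsionless means $\mathfrak{g}\to\mathfrak{g}^{\vee\vee}$ ($\mathfrak{g}^\vee=\mathrm{Hom}_A(\mathfrak{g},A)$) is injective. Tensors $X(\mathfrak{g},A)=\bigoplus_k\Lambda^k_A\mathfrak{g}$, cotensors $\Omega(\mathfrak{g},A)=\bigoplus_k\Lambda^k_A\mathfrak{g}^\vee$. Tensor grading: $|x|=k$ for $x\in\Lambda^k_A\mathfrak{g}$ and $|f|=-k$ for $f\in\Lambda^k_A\mathfrak{g}^\vee$ (tensors in positive, cotensors in negative degrees). The right contraction $i_x$ is defined by $\langle i_xf,z\rangle=\langle f,x\wedge z\rangle$ for all tensors $z$, where $\langle\cdot,\cdot\rangle$ is the natural determinant pairing between $\Lambda^k_A\mathfrak{g}^\vee$ and $\Lambda^k_A\mathfrak{g}$; $d$ is the de Rham (Chevalley–Eilenberg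 type) differential on $\Omega(\mathfrak{g},A)$, $df(x_0\wedge\cdots\wedge x_k)=\sum_j(-1)^jD_{x_j}(f(\cdots\widehat{x_j}\cdots))+\sum_{i<j}(-1)^{i+j}f([x_i,x_j]\wedge\cdots\widehat{x_i}\cdots\widehat{x_j}\cdots)$. An $n$-plectic structure is a torsionless Lie Rinehart pair with a cocycle $\omega\in\Lambda^{n+1}_A\mathfrak{g}^\vee$. A Poisson cotensor is a cotensor $f$ for which there exist tensors $x$ with $i_x\omega=df$ (Hamilton tensor) and $y$ with $i_y\omega=f$ (Poisson constraint); $\mathcal{P}ois(A,\mathfrak{g},\omega)$ is the set of Poisson cotensors. *)

(* Defs.v *)
From HB Require Import structures.
From mathcomp Require Import all_boot all_order all_algebra.
From mathcomp Require Import Rstruct.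
From Stdlib Require Rdefinitions.
Notation R := Rdefinitions.R.
Set Implicit Arguments. Unset Strict Implicit. Unset Printing Implicit Defensive.
Import GRing.Theory Num.Theory.
Local Open Scope ring_scope.

Section LieRinehart.
Variables (A : comAlgType R) (g : lmodType A).

(* Real scalars act on g through the structure map R -> A. *)

Definition real_lie_algebra (br : g -> g -> g) : Prop :=
  [/\ (forall u v w, br (u + v) w = br u w + br v w),
      (forall (r : R) u v, br ((r%:A : A) *: u) v = (r%:A : A) *: br u v),
      (forall u v, br u v = - br v u) &
      (forall u v w, br u (br v w) + br v (br w u) + br w (br u v) = 0)].

Definition derivation (Dx : A -> A) : Prop :=
  [/\ (forall a b, Dx (a + b) = Dx a + Dx b),
      (forall (r : R) a, Dx (r%:A * a) = r%:A * Dx a) &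
      (forall a b, Dx (a * b) = Dx a * b + a * Dx b)].

Definition lie_rinehart (br : g -> g -> g) (D : g -> A -> A) : Prop :=
  [/\ real_lie_algebra br,
      (forall x, derivation (D x)),
      (forall x y a, D (x + y) a = D x a + D y a),
      (forall (r : R) x a, D ((r%:A : A) *: x) a = r%:A * D x a) &
      (forall x y a, D (br x y) a = D x (D y a) - D y (D x a))]
  /\ (forall x y (a : A), br x (a *: y) = D x a *: y + a *: br x y).

Definition dual := {linear g -> A^o}.

Definition torsionless : Prop :=
  forall x y : g, (forall phi : dual, phi x = phi y) -> x = y.

(* A tensor is represented by a finite formal A-linear combination of
   decomposable wedges a * (u_1 /\ ... /\ u_p), encoded as (a, [:: u_1; ...; u_p]).
   (All operations below only use such representatives and are compatible with
   the relations of the exterior algebra.) *)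
Definition tensor := seq (A * seq g).

Definition tensor_hom (p : nat) (x : tensor) : Prop :=
  all (fun t => size t.2 == p) x.

(* A cotensor is seen through the determinant pairing as a function on
   sequences (z_1, ..., z_m) of elements of g, giving <F, z_1 /\ ... /\ z_m>. *)
Definition cotensor := seq g -> A.

Definition det_pair (k : nat) (phi : k.-tuple dual) (s : seq g) : A :=
  \det (\matrix_(i < k, j < k) (tnth phi i) (nth 0 s j)).

Definition cotensor_hom (k : nat) (F : cotensor) : Prop :=
  exists r : seq (A * k.-tuple dual),
    forall s, F s = if size s == k then \sum_(t <- r) t.1 * det_pair t.2 s
                    else 0.

Definition del (j : nat) (s : seq g) : seq g := take j s ++ drop j.+1 s.

(* right contraction: <i_x F, z> = <F, x /\ z> *)
Definition contr (x : tensor) (F : cotensor) : cotensor :=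
  fun s => \sum_(t <- x) t.1 * F (t.2 ++ s).

Definition dR (br : g -> g -> g) (D : g -> A -> A) (F : cotensor) : cotensor :=
  fun s =>
    \sum_(j < size s) (-1) ^+ j * D (nth 0 s j) (F (del j s))
  + \sum_(j < size s) \sum_(i < j)
      (-1) ^+ (i + j) * F (br (nth 0 s i) (nth 0 s j) :: del i (del j s)).

End LieRinehart.

Definition n_plectic (A : comAlgType R) (g : lmodType A)
    (br : g -> g -> g) (D : g -> A -> A) (n : nat) (omega : cotensor g) : Prop :=
  [/\ lie_rinehart br D, torsionless g, cotensor_hom n.+1 omega
    & dR br D omega = (fun _ => 0)].

Definition tdeg_tensor (p : nat) : int := p%:Z.
Definition tdeg_cotensor (k : nat) : int := - k%:Z.

(* Main.v *)
Require Import Defs.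
From HB Require Import structures.
From mathcomp Require Import all_boot all_order all_algebra.
From mathcomp Require Import Rstruct.
From mathcomp Require Import zify.
Import GRing.Theory Num.Theory.
Local Open Scope ring_scope.

Lemma sum_seq_nz (V : nmodType) (I : Type) (P : pred I) (r : seq I) (F : I -> V) :
  all P r -> \sum_(t <- r) F t != 0 -> exists t, P t /\ F t != 0.
Proof.
elim: r => [|a r IH]; first by rewrite big_nil eqxx.
move=> /= /andP [Pa Pr]; rewrite big_cons.
case: (eqVneq (F a) 0) => [->|Ha _]; last by exists a.
by rewrite add0r; apply: IH.
Qed.

Arguments sum_seq_nz {V I P r F}.

Lemma sum_ord_nz (V : nmodType) (m : nat) (F : 'I_m -> V) :
  \sum_(j < m) F j != 0 -> exists j, F j != 0.
Proof.
move=> H; have [j [_ Hj]] := @sum_seq_nz _ _ predT _ _ (all_predT _) H; by exists j.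
Qed.

Arguments sum_ord_nz {V m F}.
Lemma size_del (T : Type) (j : nat) (s : seq T) :
  (j < size s)%N -> size (take j s ++ drop j.+1 s) = (size s).-1.
Proof. move=> Hj; rewrite size_cat size_take size_drop Hj; lia. Qed.

Lemma hom_nz (A : comAlgType R) (g : lmodType A) k (f : cotensor g) s :
  cotensor_hom k f -> f s != 0 -> size s = k.
Proof.
move=> [r Hr]; rewrite Hr; case: (size s =P k) => // _; rewrite eqxx; by [].
Qed.

Arguments hom_nz {A g k f s}.

Lemma contr_nz (A : comAlgType R) (g : lmodType A) m p (x : tensor g)
   (F : cotensor g) s :
  cotensor_hom m F -> tensor_hom p x -> contr x F s != 0 -> (p + size s = m)%N.
Proof.
move=> hF hx H.
have [t [/eqP Ht Hn]] := sum_seq_nz hx H.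
have : F (t.2 ++ s) != 0 by apply: contraNneq Hn => ->; rewrite mulr0.
by move/(hom_nz hF); rewrite size_cat Ht.
Qed.

Arguments contr_nz {A g m p x F s}.

Lemma dR_nz (A : comAlgType R) (g : lmodType A) br (D : g -> A -> A) k
   (f : cotensor g) s :
  (forall x, derivation (D x)) -> cotensor_hom k f -> dR br D f s != 0 ->
  size s = k.+1 /\ exists s', f s' != 0.
Proof.
move=> hD hf; rewrite /dR.
have D0 : forall u, D u 0 = 0.
  move=> u; have [Hadd _ _] := hD u; have h := Hadd 0 0.
  rewrite addr0 in h; apply: (@addrI _ (D u 0)); by rewrite addr0 -h.
case: (eqVneq (\sum_(j < size s) (-1) ^+ j * D (nth 0 s j) (f (del j s))) 0) => [->|H1 _].
  rewrite add0r => /sum_ord_nz [j /sum_ord_nz [i Hi]].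
  have : f (br (nth 0 s i) (nth 0 s j) :: del i (del j s)) != 0.
    by apply: contraNneq Hi => ->; rewrite mulr0.
  move=> Hz; split; last by eexists; exact: Hz.
  have := ltn_ord i; have := ltn_ord j => Hjs Hij.
  move: Hz; move/(hom_nz hf) => /=; rewrite /del. rewrite size_cat !size_take !size_drop size_cat size_take size_drop Hjs.
  rewrite ifT; lia.
have [j Hj] := sum_ord_nz H1.
have : f (del j s) != 0 by apply: contraNneq Hj => ->; rewrite D0 mulr0.
move=> Hz; split; last by eexists; exact: Hz.
have := ltn_ord j; move: Hz; move/(hom_nz hf); rewrite /del size_del //; lia.
Qed.

Arguments dR_nz {A g br D k f s}.

Theorem mainTheorem3 (A : comAlgType R) (g : lmodType A)
    (br : g -> g -> g) (D : g -> A -> A) (n : nat) (omega : cotensor g)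
    (hplectic : n_plectic br D n omega)
    (f : cotensor g) (k : nat) (hf : cotensor_hom k f)
    (x y : tensor g) (p q : nat)
    (hx : tensor_hom p x) (hy : tensor_hom q y)
    (hHam : contr x omega = dR br D f)
    (hPc : contr y omega = f) :
  ((exists s, dR br D f s != 0) ->
     tdeg_tensor p = tdeg_cotensor k + n%:Z /\
     tdeg_tensor q = tdeg_tensor p + 1)
  /\ dR br D (contr y omega) = contr x omega.
Proof.
split; last by rewrite hPc hHam.
case: hplectic => [[[_ hD _ _ _] _] _ homega _] [s Hs].
have [Ss [s' Hs']] := dR_nz hD hf Hs.
have Hk := hom_nz hf Hs'.
have Hp : (p + size s = n.+1)%N by apply: (contr_nz homega hx); rewrite hHam.
have Hq : (q + size s' = n.+1)%N by apply: (contr_nz homega hy); rewrite hPc.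
rewrite /tdeg_tensor /tdeg_cotensor; split; lia.
Qed.
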